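(* Let $L>0$, $D>0$, $s_0\ge0$, $X=[-D/2,D/2]$, and consider the class of problems $\min_{x\in X}g_{t,d,s}(x)$ indexed by $t\ne0$ with $|t|<\frac12L^{1/2}[2(D+s_0)]^{-1/2}$, $d=D/2$ if $t>0$ and $d=-D/2$ if $t<0$, $s=s_0$, where $f_{t,d,s}(x)=t(d-x)$, $\alpha=|t|^{4/3}L^{-2/3}[2(D+s)]^{2/3}$, the stochastic first-order oracle returns $(F_{t,d,s}(x,\xi),F'_{t,d,s}(x,\xi))=\big(-\frac{|t|s}{2(1-\alpha)},0\big)$ with probability $1-\alpha$ and $\frac1\alpha\big(f_{t,d,s}(x)+\frac{|t|s}2,f'_{t,d,s}(x)\big)$ with probability $\alpha$, and $g_{t,d,s}(x)=\mathbb{E}[(F_{t,d,s}(x,\xi)-f_{t,d,s}(x))_+^2]$. Then any method with a deterministic rule for the sample trajectories requires at least $N\ge\Omega(L^2D^2\epsilon^{-2})$ oracle samples to find an $\epsilon$-optimal solution for this class of problems $\min_{x\in X}g_{t,d,s}(x)$.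
   Context: $(a)_+=\max\{a,0\}$. A point $\tilde x$ is $\epsilon$-optimal for $\min_Xg$ if $\mathbb{E}[g(\tilde x)]-\min_Xg\le\epsilon$. A method with a deterministic rule for the sample trajectories sequentially queries the oracle from a given initial point, each query point and the output being deterministic functions of the initial point and the oracle answers received so far; it is required to succeed on every problem of the class. *)

(* Defs.v *)
From Stdlib Require Import Reals Lra List.
Open Scope R_scope.
Import ListNotations.

Definition pospart (a : R) : R := Rmax a 0.

Definition dpar (D t : R) : R := if Rlt_dec 0 t then D / 2 else - (D / 2).

Definition alpha_par (L D s t : R) : R :=
  Rpower (Rabs t) (4/3) * Rpower L (-(2/3)) * Rpower (2 * (D + s)) (2/3).

Definition f_tds (t d : R) (x : R) : R := t * (d - x).
Definition df_tds (t : R) (x : R) : R := - t.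

(* Oracle answer: xi = false (probability 1 - alpha) and xi = true (probability alpha) *)
Definition oracle (t d s a : R) (x : R) (xi : bool) : R * R :=
  if xi then ((f_tds t d x + Rabs t * s / 2) / a, df_tds t x / a)
  else (- (Rabs t * s) / (2 * (1 - a)), 0).

Definition g_tds (t d s a : R) (x : R) : R :=
  (1 - a) * (pospart (fst (oracle t d s a x false) - f_tds t d x)) ^ 2
  + a * (pospart (fst (oracle t d s a x true) - f_tds t d x)) ^ 2.

(* Sample trajectory of a deterministic method: the query rule [q] maps the
   oracle answers received so far to the next query point (q [] is the initial
   point); [bs] is the sequence of i.i.d. oracle samples xi_1, ..., xi_N. *)
Fixpoint traj (q : list (R * R) -> R) (orc : R -> bool -> R * R)
    (hist : list (R * R)) (bs : list bool) : list (R * R) :=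
  match bs with
  | nil => hist
  | b :: bs' => traj q orc (hist ++ [orc (q hist) b]) bs'
  end.

Fixpoint expect (N : nat) (a : R) (F : list bool -> R) : R :=
  match N with
  | O => F nil
  | S n => a * expect n a (fun bs => F (true :: bs))
           + (1 - a) * expect n a (fun bs => F (false :: bs))
  end.

(* Main.v *)
Require Import Defs.
From Stdlib Require Import Reals Lra List.
Open Scope R_scope.

Lemma Rdiv_le_0_compat (x y : R) : 0 <= x -> 0 < y -> 0 <= x / y.
Proof. intros. unfold Rdiv. apply Rmult_le_pos; [lra|]. apply Rlt_le, Rinv_0_lt_compat; lra. Qed.

Definition Gf (T s a f : R) : R :=
  (1 - a) * (pospart (- (T * s) / (2 * (1 - a)) - f)) ^ 2
  + a * (pospart ((f + T * s / 2) / a - f)) ^ 2.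

Lemma g_Gf t d s a x T : Rabs t = T -> g_tds t d s a x = Gf T s a (f_tds t d x).
Proof. intros HT. unfold g_tds, Gf, oracle; simpl. rewrite HT. reflexivity. Qed.

Lemma G_diff T s a f : 0 < a < 1 -> 0 <= T -> 0 <= s -> 0 <= f ->
  Gf T s a f - Gf T s a 0 = (1 - a) * f * ((1 - a) * f + T * s) / a.
Proof.
  intros Ha HT Hs Hf. unfold Gf, pospart.
  assert (H0 : forall g, 0 <= g -> - (T * s) / (2 * (1 - a)) - g <= 0).
  { intros g Hg. assert (0 <= T * s / (2 * (1 - a))).
    { apply Rdiv_le_0_compat; [nra | lra]. }
    unfold Rdiv in *. lra. }
  assert (H1 : forall g, 0 <= g -> 0 <= (g + T * s / 2) / a - g).
  { intros g Hg. replace ((g + T * s / 2) / a - g) with (((1 - a) * g + T * s / 2) / a)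
      by (field; lra).
    apply Rdiv_le_0_compat; nra. }
  rewrite (Rmax_right _ 0 (H0 f Hf)), (Rmax_right _ 0 (H0 0 (Rle_refl 0))).
  rewrite (Rmax_left _ 0 (H1 f Hf)), (Rmax_left _ 0 (H1 0 (Rle_refl 0))).
  field. lra.
Qed.

Lemma expect_lin N a F C : expect N a (fun bs => F bs - C) = expect N a F - C.
Proof.
  revert F; induction N as [|n IH]; intros F; simpl; auto.
  rewrite (IH (fun bs => F (true :: bs))), (IH (fun bs => F (false :: bs))). ring.
Qed.

Lemma expect_lb N a F : 0 <= a <= 1 -> (forall bs, length bs = N -> 0 <= F bs) ->
  (1 - a) ^ N * F (repeat false N) <= expect N a F.
Proof.
  revert F; induction N as [|n IH]; intros F Ha HF; simpl.
  - specialize (HF nil eq_refl). lra.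
  - assert (A1 := IH (fun bs => F (true :: bs)) Ha
                   (fun bs Hb => HF (true :: bs) (f_equal S Hb))).
    assert (A2 := IH (fun bs => F (false :: bs)) Ha
                   (fun bs Hb => HF (false :: bs) (f_equal S Hb))).
    simpl in A1, A2.
    assert (0 <= F (true :: repeat false n)).
    { apply HF. simpl. rewrite repeat_length. reflexivity. }
    assert (0 <= (1 - a) ^ n) by (apply pow_le; lra).
    assert (0 <= a * expect n a (fun bs => F (true :: bs))).
    { apply Rmult_le_pos; [lra|]. eapply Rle_trans; [|exact A1]. apply Rmult_le_pos; lra. }
    assert ((1 - a) * ((1 - a) ^ n * F (false :: repeat false n)) <=
            (1 - a) * expect n a (fun bs => F (false :: bs))).
    { apply Rmult_le_compat_l; lra. }
    lra.
Qed.

Lemma traj_false q o1 o2 N hist : (forall x, o1 x false = o2 x false) ->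
  traj q o1 hist (repeat false N) = traj q o2 hist (repeat false N).
Proof.
  intros H; revert hist; induction N as [|n IH]; intros hist; simpl; auto.
  rewrite H. apply IH.
Qed.

Lemma bernoulli a n : 0 <= a <= 1 -> 1 - INR n * a <= (1 - a) ^ n.
Proof.
  intros Ha; induction n as [|n IH]; [simpl; lra|]. rewrite S_INR. change ((1 - a) ^ S n) with ((1 - a) * (1 - a) ^ n).
  assert (0 <= INR n) by apply pos_INR. assert ((1-a)*(1 - INR n * a) <= (1-a)*(1-a)^n) by (apply Rmult_le_compat_l; lra). assert (0 <= INR n * (a * a)) by (apply Rmult_le_pos; nra). nra.
Qed.

Lemma key (t d s a T D L r eps : R) (N : nat) (F : list bool -> R) :
  Rabs t = T -> 0 < T -> 0 <= s -> 0 < D -> 0 < L -> a = r ^ 2 -> 0 < r <= 1/2 ->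
  T ^ 2 = r ^ 3 * L / (2 * (D + s)) ->
  (forall bs, length bs = N -> 0 <= f_tds t d (F bs)) ->
  T * D / 2 <= f_tds t d (F (repeat false N)) ->
  expect N a (fun bs => g_tds t d s a (F bs)) - g_tds t d s a d <= eps ->
  (1 - a) ^ N * ((1 - a) ^ 2 * r * L * D / 8) <= eps.
Proof.
  intros HT HT0 Hs HD HL Ha Hr HT2 Hpos Hbad Hexp.
  assert (Ha01 : 0 < a < 1) by (subst; split; nra).
  rewrite <- expect_lin in Hexp.
  assert (E := expect_lb N a (fun bs => g_tds t d s a (F bs) - g_tds t d s a d)
                 ltac:(lra)).
  assert (Hd : f_tds t d d = 0) by (unfold f_tds; ring).
  assert (Hg : forall x, 0 <= f_tds t d x ->
     g_tds t d s a x - g_tds t d s a d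
     = (1 - a) * f_tds t d x * ((1 - a) * f_tds t d x + T * s) / a).
  { intros x Hx. rewrite !(g_Gf t d s a _ T HT), Hd. apply G_diff; lra. }
  simpl in E.
  assert (Hnn : forall bs, length bs = N -> 0 <= g_tds t d s a (F bs) - g_tds t d s a d).
  { intros bs Hb. rewrite Hg by (apply Hpos; auto).
    specialize (Hpos bs Hb). apply Rdiv_le_0_compat; [|lra].
    apply Rmult_le_pos; nra. }
  specialize (E Hnn).
  assert (Hlow : (1 - a) ^ 2 * r * L * D / 8 <=
     g_tds t d s a (F (repeat false N)) - g_tds t d s a d).
  { rewrite Hg by nra. set (f := f_tds t d (F (repeat false N))) in *.
    assert (Hm : (1 - a) ^ 2 * r * L * D / 8 = ((1-a)^2 * T^2 * D * (D + s) / 4) / a).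
    { rewrite HT2, Ha. field. split; lra. }
    rewrite Hm. unfold Rdiv. apply Rmult_le_compat_r.
    { apply Rlt_le, Rinv_0_lt_compat; lra. }
    assert (0 <= T * D / 2) by (apply Rdiv_le_0_compat; [apply Rmult_le_pos|]; lra).
    assert (0 <= (1 - a) * (T * D / 2)) by (apply Rmult_le_pos; lra).
    assert ((1 - a) * (T * D / 2) <= (1 - a) * f) by (apply Rmult_le_compat_l; lra).
    assert (0 <= (1 - a) * T * s) by (apply Rmult_le_pos; [apply Rmult_le_pos|]; lra).
    assert ((1-a) * T * s <= T * s) by (assert (0 <= a * T * s) by (apply Rmult_le_pos; [apply Rmult_le_pos|]; lra); lra).
    assert (0 <= (1 - a)^2 * T^2 * D * s) by (apply Rmult_le_pos;[|lra]; apply Rmult_le_pos;[|lra]; apply Rmult_le_pos; apply pow_le; lra).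
    assert ((1 - a) * (T * D / 2) * ((1 - a) * (T * D / 2) + (1-a) * T * s) <=
            (1 - a) * f * ((1 - a) * f + T * s)).
    { apply Rmult_le_compat; nra. }
    nra. }
  assert (0 <= (1 - a) ^ N) by (apply pow_le; lra).
  nra.
Qed.

Theorem lemma12 :
  exists c c0 : R, 0 < c /\ 0 < c0 /\
  forall (L D s0 eps : R), 0 < L -> 0 < D -> 0 <= s0 ->
  0 < eps -> eps <= c0 * L * D ->
  forall (N : nat) (q : list (R * R) -> R) (out : list (R * R) -> R),
  (forall t : R, t <> 0 ->
     Rabs t < / 2 * sqrt L / sqrt (2 * (D + s0)) ->
     let d := dpar D t in
     let a := alpha_par L D s0 t in
     (forall bs : list bool, length bs = N ->
        - (D / 2) <= out (traj q (oracle t d s0 a) nil bs) <= D / 2) /\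
     (forall y : R, - (D / 2) <= y <= D / 2 ->
        expect N a (fun bs => g_tds t d s0 a (out (traj q (oracle t d s0 a) nil bs)))
          - g_tds t d s0 a y <= eps)) ->
  c * (L ^ 2 * D ^ 2 / eps ^ 2) <= INR N.
Proof.
  exists (1/2048), (1/64). split; [lra|]. split; [lra|].
  intros L D s0 eps HL HD Hs Heps Hec N q out H.
  assert (HN : 0 <= INR N) by apply pos_INR.
  set (sN := sqrt (INR N + 1)).
  assert (HsN : 1 <= sN).
  { unfold sN. apply Rle_trans with (sqrt 1); [rewrite sqrt_1; lra|]. apply sqrt_le_1_alt. lra. }
  assert (HsN2 : sN * sN = INR N + 1) by (apply sqrt_sqrt; lra).
  set (r := / (2 * sN)).
  assert (Hr : 0 < r <= 1/2).
  { unfold r. split. apply Rinv_0_lt_compat; lra.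
    replace (1/2) with (/ 2) by lra. apply Rinv_le_contravar; lra. }
  set (a := r ^ 2).
  set (M := 2 * (D + s0)).
  assert (HM : 0 < M) by (unfold M; lra).
  set (X := r ^ 3 * L / M).
  assert (HX : 0 < X) by (unfold X; apply Rdiv_lt_0_compat; [apply Rmult_lt_0_compat; [apply pow_lt|]|]; lra).
  set (T := sqrt X).
  assert (HT : 0 < T) by (apply sqrt_lt_R0; auto).
  assert (HT2 : T ^ 2 = r ^ 3 * L / (2 * (D + s0))).
  { replace (T ^ 2) with (T * T) by ring. unfold T. rewrite sqrt_sqrt by lra. reflexivity. }
  assert (Halpha : forall t, Rabs t = T -> alpha_par L D s0 t = a).
  { intros t Ht. unfold alpha_par, Rpower. rewrite Ht. fold M.
    rewrite <- !exp_plus.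
    assert (HlnT : 2 * ln T = 3 * ln r + ln L - ln M).
    { assert (ln X = 2 * ln T).
      { unfold T. rewrite <- (sqrt_sqrt X) at 1 by lra. rewrite ln_mult by auto. ring. }
      rewrite <- H0. unfold X, Rdiv.
      assert (0 < r ^ 3) by (apply pow_lt; lra).
      assert (0 < / M) by (apply Rinv_0_lt_compat; lra).
      rewrite ln_mult by (try apply Rmult_lt_0_compat; lra).
      rewrite ln_mult by lra. rewrite ln_Rinv by lra.
      replace (r ^ 3) with (r * (r * r)) by ring.
      rewrite !ln_mult by (try apply Rmult_lt_0_compat; lra). ring. }
    unfold a. replace (r ^ 2) with (exp (ln (r ^ 2))) by (apply exp_ln; apply pow_lt; lra).
    f_equal. simpl. rewrite Rmult_1_r, ln_mult by lra. nra. }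
  assert (Hbound : T < / 2 * sqrt L / sqrt (2 * (D + s0))).
  { fold M. assert (HsL : 0 < sqrt L) by (apply sqrt_lt_R0; auto).
    assert (HsM : 0 < sqrt M) by (apply sqrt_lt_R0; auto).
    assert (B2 : (/ 2 * sqrt L / sqrt M) ^ 2 = L / (4 * M)).
    { simpl. rewrite Rmult_1_r.
      replace (/ 2 * sqrt L / sqrt M * (/ 2 * sqrt L / sqrt M)) with
        ((sqrt L * sqrt L) / (4 * (sqrt M * sqrt M))) by (field; lra).
      rewrite !sqrt_sqrt; lra. }
    assert (T ^ 2 < (/ 2 * sqrt L / sqrt M) ^ 2).
    { rewrite B2, HT2. fold M. unfold Rdiv.
      assert (r ^ 3 <= 1/8) by (simpl; nra).
      assert (0 < / M) by (apply Rinv_0_lt_compat; auto).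
      replace (L * / (4 * M)) with (/4 * L * / M) by (field; lra).
      assert (0 < L * / M) by nra. nra. }
    assert (0 < / 2 * sqrt L / sqrt M) by (unfold Rdiv; apply Rmult_lt_0_compat; [nra|apply Rinv_0_lt_compat; auto]).
    nra. }
  assert (HaT : alpha_par L D s0 T = a) by (apply Halpha; rewrite Rabs_pos_eq; lra).
  assert (HamT : alpha_par L D s0 (- T) = a) by (apply Halpha; rewrite Rabs_Ropp, Rabs_pos_eq; lra).
  assert (HdT : dpar D T = D / 2) by (unfold dpar; destruct (Rlt_dec 0 T); lra).
  assert (HdmT : dpar D (- T) = - (D / 2)) by (unfold dpar; destruct (Rlt_dec 0 (-T)); lra).
  destruct (H T ltac:(lra) ltac:(rewrite Rabs_pos_eq; lra)) as [Hr1 He1].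
  destruct (H (- T) ltac:(lra) ltac:(rewrite Rabs_Ropp, Rabs_pos_eq; lra)) as [Hr2 He2].
  simpl in Hr1, He1, Hr2, He2.
  rewrite HaT, HdT in Hr1, He1. rewrite HamT, HdmT in Hr2, He2.
  assert (Htr : traj q (oracle T (D / 2) s0 a) nil (repeat false N) =
                traj q (oracle (- T) (- (D / 2)) s0 a) nil (repeat false N)).
  { apply traj_false. intros x. unfold oracle. rewrite Rabs_Ropp. reflexivity. }
  set (xs := out (traj q (oracle T (D / 2) s0 a) nil (repeat false N))).
  assert (Hxs : - (D/2) <= xs <= D/2) by (apply Hr1, repeat_length).
  assert (Hfin : (1 - a) ^ N * ((1 - a) ^ 2 * r * L * D / 8) <= eps).
  { destruct (Rle_dec xs 0) as [Hx | Hx].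
    - apply (key T (D/2) s0 a T D L r eps N (fun bs => out (traj q (oracle T (D / 2) s0 a) nil bs)));
        auto; try lra.
      + rewrite Rabs_pos_eq; lra.
      + intros bs Hb. specialize (Hr1 bs Hb). unfold f_tds. nra.
      + fold xs. unfold f_tds. nra.
      + apply He1. lra.
    - apply (key (-T) (-(D/2)) s0 a T D L r eps N (fun bs => out (traj q (oracle (-T) (-(D / 2)) s0 a) nil bs)));
        auto; try lra.
      + rewrite Rabs_Ropp, Rabs_pos_eq; lra.
      + intros bs Hb. specialize (Hr2 bs Hb). unfold f_tds. nra.
      + rewrite <- Htr. fold xs. unfold f_tds. nra.
      + apply He2. lra. }
  assert (Ha4 : a * (4 * (INR N + 1)) = 1).
  { unfold a, r. rewrite <- HsN2. field. lra. }
  assert (Hpow : 1/2 <= (1 - a) ^ (N + 2)).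
  { eapply Rle_trans; [|apply bernoulli; unfold a; split; nra].
    rewrite plus_INR. simpl. nra. }
  rewrite pow_add in Hpow.
  assert (Hk : r * L * D / 16 <= eps).
  { assert (0 < r * L * D) by (apply Rmult_lt_0_compat; [apply Rmult_lt_0_compat|]; lra).
    assert (Heq : (1 - a) ^ N * ((1 - a) ^ 2 * r * L * D / 8) =
      ((1 - a) ^ N * (1 - a) ^ 2) * (r * L * D / 8)) by (unfold Rdiv; ring).
    rewrite Heq in Hfin.
    assert (1/2 * (r * L * D / 8) <= ((1 - a) ^ N * (1 - a) ^ 2) * (r * L * D / 8)).
    { apply Rmult_le_compat_r; [|lra]. apply Rlt_le, Rdiv_lt_0_compat; lra. }
    lra. }
  assert (HLD : L * D <= 32 * sN * eps).
  { unfold r in Hk. assert (0 < sN) by lra.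
    replace (/ (2 * sN) * L * D / 16) with (L * D / (32 * sN)) in Hk by (field; lra).
    apply Rmult_le_reg_r with (/ (32 * sN)). apply Rinv_0_lt_compat; lra.
    replace (32 * sN * eps * / (32 * sN)) with eps by (field; lra). exact Hk. }
  assert (HLD2 : (L * D) ^ 2 <= 1024 * (INR N + 1) * eps ^ 2).
  { assert (0 <= L * D) by nra. rewrite <- HsN2.
    replace (1024 * (sN * sN) * eps ^ 2) with ((32 * sN * eps) ^ 2) by ring.
    apply pow_incr. lra. }
  assert (H64 : 64 * eps <= L * D) by lra.
  assert (HN3 : 3 <= INR N).
  { assert (4096 * eps ^ 2 <= (L * D) ^ 2).
    { replace (4096 * eps ^ 2) with ((64 * eps) ^ 2) by ring. apply pow_incr. lra. }
    nra. }
  apply Rmult_le_reg_r with (eps ^ 2). apply pow_lt; lra.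
  replace (1 / 2048 * (L ^ 2 * D ^ 2 / eps ^ 2) * eps ^ 2) with ((L * D) ^ 2 / 2048)
    by (field; lra).
  nra.
Qed.
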